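(* Let $V_1,V_2$ be symplectic spaces over $\mathbb F_q$ and $V_1\times V_2$ their product with symplectic form $\omega_1\oplus\omega_2$. Let $r:H(V_1)\times H(V_2)\to H(V_1\times V_2)$, $r((v_1,z_1),(v_2,z_2))=((v_1,v_2),z_1+z_2)$, and $s:OLag(V_1)\times OLag(V_2)\to OLag(V_1\times V_2)$, $s(L_1^\circ,L_2^\circ)=(L_1\times L_2,o_{L_1}\wedge o_{L_2})$ (using $\bigwedge^{top}(L_1\times L_2)\cong\bigwedge^{top}L_1\otimes\bigwedge^{top}L_2$, $a\otimes b\mapsto a\wedge b$). For $(L_1^\circ,L_2^\circ)$ let $r^*_{(L_1^\circ,L_2^\circ)}:\mathcal H_{s(L_1^\circ,L_2^\circ)}(V_1\times V_2)\to\mathcal H_{L_1^\circ}(V_1)\otimes\mathcal H_{L_2^\circ}(V_2)$ be $g\mapsto g\circ r$ (functions on $H(V_1)\times H(V_2)$ being identified with the tensor product of function spaces). Then for all $(L_1^\circ,L_2^\circ),(M_1^\circ,M_2^\circ)\in OLag(V_1)\times OLag(V_2)$, $$\big(T^{V_1}_{M_1^\circ,L_1^\circ}\otimes T^{V_2}_{M_2^\circ,L_2^\circ}\big)\circ r^*_{(L_1^\circ,L_2^\circ)}=r^*_{(M_1^\circ,M_2^\circ)}\circ T^{V_1\times V_2}_{s(M_1^\circ,M_2^\circ),\,s(L_1^\circ,L_2^\circ)}.$$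
   Context: $q$ is a power of an odd prime. For a symplectic space $(V,\omega)$ of dimension $2n$ over $\mathbb F_q$: $H(V)$ is $V\times\mathbb F_q$ with $(v,z)(v',z')=(v+v',z+z'+\tfrac12\omega(v,v'))$; $\psi$ is a fixed non-trivial character of $\mathbb F_q$ (the same for all spaces); an oriented Lagrangian is $L^\circ=(L,o_L)$ with $L$ Lagrangian and $o_L\in\bigwedge^nL$ nonzero, $OLag(V)$ their set; $\mathcal H_{L^\circ}(V)$ is the space of $f:H(V)\to\mathbb C$ with $f((0,z)(l,0)h)=\psi(z)f(h)$ ($z\in\mathbb F_q,l\in L,h\in H(V)$), with $H(V)$ acting by right translation. $\omega_\wedge(a_1\wedge\dots\wedge a_n,b_1\wedge\dots\wedge b_n)=(-1)^{n(n-1)/2}\det(\omega(a_i,b_j))$; $\sigma$ the Legendre character; $G_1=\sum_z\psi(\tfrac12z^2)$. For $M+L=V$ set $T^0_{M^\circ,L^\circ}f(h)=(G_1/q)^n\sigma((-1)^{n(n-1)/2}\omega_\wedge(o_L,o_M))\sum_{m\in M}f((m,0)h)$. The canonical trivialization $T^V$ is the unique family of $H(V)$-intertwining isomorphisms $T^V_{M^\circ,L^\circ}:\mathcal H_{L^\circ}(V)\to\mathcal H_{M^\circ}(V)$, $(M^\circ,L^\circ)\in OLag(V)^2$, with $T^V_{N^\circ,M^\circ}T^V_{M^\circ,L^\circ}=T^V_{N^\circ,L^\circ}$ always and $T^V=T^0$ on pairs in general position. *)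

(* Defs.v *)
From HB Require Import structures.
From mathcomp Require Import all_boot all_order all_algebra all_field.
Set Implicit Arguments. Unset Strict Implicit. Unset Printing Implicit Defensive.
Import Order.TTheory GRing.Theory Num.Theory.
Local Open Scope ring_scope.

Section Weil.
Variable F : finFieldType.

(* A symplectic space of dimension d is modelled as 'rV[F]_d with the form
   omega B u v = u B v^T, for an alternating non-degenerate matrix B. *)
Definition omega d (B : 'M[F]_d) (u v : 'rV[F]_d) : F := (u *m B *m v^T) 0 0.

Definition symplectic d (B : 'M[F]_d) : Prop :=
  (forall v, omega B v v = 0) /\ B \in unitmx.

Definition heis d := ('rV[F]_d * F)%type.

Definition hmul d (B : 'M[F]_d) (h h' : heis d) : heis d :=
  (h.1 + h'.1, h.2 + h'.2 + 2%:R^-1 * omega B h.1 h'.1).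

(* An oriented Lagrangian L° = (L, a_1 /\ ... /\ a_n) is represented by an
   ordered basis (a_1,...,a_n) of L; L = row space of lagmx. *)
Definition lagmx d n (L : n.-tuple 'rV[F]_d) : 'M[F]_(n, d) :=
  \matrix_(i < n) tnth L i.

Definition in_lag d n (L : n.-tuple 'rV[F]_d) (v : 'rV[F]_d) : bool :=
  (v <= lagmx L)%MS.

Definition is_olag d n (B : 'M[F]_d) (L : n.-tuple 'rV[F]_d) : Prop :=
  [/\ n.*2 = d, row_free (lagmx L) &
      forall i j, omega B (tnth L i) (tnth L j) = 0].

Definition Hspace d n (B : 'M[F]_d) (psi : F -> algC) (L : n.-tuple 'rV[F]_d)
  (f : heis d -> algC) : Prop :=
  forall (z : F) (l : 'rV[F]_d) (h : heis d), in_lag L l ->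
    f (hmul B (hmul B (0, z) (l, 0)) h) = psi z * f h.

Definition omega_wedge d n (B : 'M[F]_d) (L M : n.-tuple 'rV[F]_d) : F :=
  (-1) ^+ (n * n.-1)./2 *
  \det (\matrix_(i < n, j < n) omega B (tnth L i) (tnth M j)).

Definition legendre (x : F) : algC :=
  if x == 0 then 0 else if [exists y : F, y * y == x] then 1 else -1.

Definition G1 (psi : F -> algC) : algC := \sum_(z : F) psi (2%:R^-1 * z ^+ 2).

Definition T0 d n (B : 'M[F]_d) (psi : F -> algC) (M L : n.-tuple 'rV[F]_d)
  (f : heis d -> algC) : heis d -> algC :=
  fun h => (G1 psi / #|F|%:R) ^+ n *
    legendre ((-1) ^+ (n * n.-1)./2 * omega_wedge B L M) *
    \sum_(m : 'rV[F]_d | in_lag M m) f (hmul B (m, 0) h).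

Definition gen_pos d n (M L : n.-tuple 'rV[F]_d) : bool :=
  row_full (col_mx (lagmx M) (lagmx L)).

Definition canonical_triv d n (B : 'M[F]_d) (psi : F -> algC)
  (T : n.-tuple 'rV[F]_d -> n.-tuple 'rV[F]_d ->
       (heis d -> algC) -> (heis d -> algC)) : Prop :=
  forall M L, is_olag B M -> is_olag B L ->
  (
      forall f, Hspace B psi L f -> Hspace B psi M (T M L f)) /\
      (forall (a : algC) f g, Hspace B psi L f -> Hspace B psi L g ->
        T M L (fun h => a * f h + g h) = (fun h => a * T M L f h + T M L g h)) /\
      (forall f g, Hspace B psi L f -> Hspace B psi L g ->
        T M L f = T M L g -> f = g) /\
      (forall g, Hspace B psi M g -> exists2 f, Hspace B psi L f & T M L f = g) /\
      (forall h0 f, Hspace B psi L f ->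
        T M L (fun h => f (hmul B h h0)) = (fun h => T M L f (hmul B h h0))) /\
      (forall N f, is_olag B N -> Hspace B psi L f ->
        T N M (T M L f) = T N L f) /\
      (forall f, gen_pos M L -> Hspace B psi L f -> T M L f = T0 B psi M L f).

Definition prod_form d1 d2 (B1 : 'M[F]_d1) (B2 : 'M[F]_d2) : 'M[F]_(d1 + d2) :=
  block_mx B1 0 0 B2.

Definition rmap d1 d2 (h1 : heis d1) (h2 : heis d2) : heis (d1 + d2) :=
  (row_mx h1.1 h2.1, h1.2 + h2.2).

Definition smap d1 d2 n1 n2 (L1 : n1.-tuple 'rV[F]_d1) (L2 : n2.-tuple 'rV[F]_d2)
  : (n1 + n2).-tuple 'rV[F]_(d1 + d2) :=
  cat_tuple (map_tuple (fun v => row_mx v (0 : 'rV[F]_d2)) L1)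
            (map_tuple (fun v => row_mx (0 : 'rV[F]_d1) v) L2).

(* r^*, with functions on H(V1) x H(V2) identified with H_{L1} (x) H_{L2} *)
Definition rstar d1 d2 (g : heis (d1 + d2) -> algC) : heis d1 -> heis d2 -> algC :=
  fun h1 h2 => g (rmap h1 h2).

Definition tensT d1 d2 (A1 : (heis d1 -> algC) -> heis d1 -> algC)
  (A2 : (heis d2 -> algC) -> heis d2 -> algC) (Phi : heis d1 -> heis d2 -> algC)
  : heis d1 -> heis d2 -> algC :=
  fun h1 h2 => A1 (fun h1' => A2 (Phi h1') h2) h1.

End Weil.

(* Main.v *)
Require Import Defs.
From HB Require Import structures.
From mathcomp Require Import all_boot all_order all_algebra all_field.
From Stdlib Require Import FunctionalExtensionality Lia.
Import GRing.Theory Num.Theory.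
Local Open Scope ring_scope.
Set Implicit Arguments. Unset Strict Implicit. Unset Printing Implicit Defensive.
Import Order.TTheory.

Lemma omega_rows (F : finFieldType) d m p (A : 'M[F]_(m,d)) (B : 'M[F]_d) (C : 'M[F]_(p,d)) i j :
  (A *m B *m C^T) i j = omega B (row i A) (row j C).
Proof.
rewrite /omega !mxE; apply: eq_bigr => k _; rewrite !mxE.
congr (_ * _); apply: eq_bigr => l _; by rewrite !mxE.
Qed.

Lemma lagmx_row (F : finFieldType) d n (L : n.-tuple 'rV[F]_d) i : row i (lagmx L) = tnth L i.
Proof. by rewrite /lagmx rowK. Qed.

Lemma omega_mx (F : finFieldType) d n (B : 'M[F]_d) (L M : n.-tuple 'rV[F]_d) :
  \matrix_(i < n, j < n) omega B (tnth L i) (tnth M j) = lagmx L *m B *m (lagmx M)^T.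
Proof. by apply/matrixP => i j; rewrite omega_rows !lagmx_row mxE. Qed.

Lemma omega_prod (F : finFieldType) d1 d2 (B1 : 'M[F]_d1) (B2 : 'M[F]_d2) a b c e :
  omega (prod_form B1 B2) (row_mx a b) (row_mx c e) = omega B1 a c + omega B2 b e.
Proof.
rewrite /omega /prod_form mul_row_block !mulmx0 addr0 add0r tr_row_mx mul_row_col.
by rewrite mxE.
Qed.

Lemma hmul_rmap (F : finFieldType) d1 d2 (B1 : 'M[F]_d1) (B2 : 'M[F]_d2) (a1 b1 : heis F d1) (a2 b2 : heis F d2) :
  hmul (prod_form B1 B2) (rmap a1 a2) (rmap b1 b2) = rmap (hmul B1 a1 b1) (hmul B2 a2 b2).
Proof.
rewrite /hmul /rmap /= omega_prod add_row_mx; congr (_, _).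
rewrite mulrDr.
by rewrite (addrACA a1.2 a2.2); exact: addrACA.
Qed.

Lemma hmul0 (F : finFieldType) d (B : 'M[F]_d) (h : heis F d) : hmul B (0, 0) h = h.
Proof. by case: h => v z; rewrite /hmul /omega /= !mul0mx mxE mulr0 !add0r addr0. Qed.


Lemma lagmx_smap (F : finFieldType) d1 d2 n1 n2 (L1 : n1.-tuple 'rV[F]_d1) (L2 : n2.-tuple 'rV[F]_d2) :
  lagmx (smap L1 L2) = block_mx (lagmx L1) 0 0 (lagmx L2).
Proof.
apply/row_matrixP => i; rewrite lagmx_row block_mxEv -[i]splitK.
case: (split i) => [i1|i2] /=.
  by rewrite rowKu row_row_mx row0 lagmx_row /smap tnth_lshift tnth_map.
by rewrite rowKd row_row_mx row0 lagmx_row /smap tnth_rshift tnth_map.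
Qed.

Lemma in_lag_row_mx (F : finFieldType) d1 d2 n1 n2 (L1 : n1.-tuple 'rV[F]_d1) (L2 : n2.-tuple 'rV[F]_d2) a b :
  in_lag (smap L1 L2) (row_mx a b) = in_lag L1 a && in_lag L2 b.
Proof.
rewrite /in_lag lagmx_smap; apply/idP/andP.
  case/submxP => w; rewrite -[w]hsubmxK mul_row_block !mulmx0 addr0 add0r.
  by case/eq_row_mx => -> ->; rewrite !submxMl.
case=> /submxP[x ->] /submxP[y ->]; apply/submxP; exists (row_mx x y).
by rewrite mul_row_block !mulmx0 addr0 add0r.
Qed.

Lemma Hs_r2 (F : finFieldType) d1 d2 n1 n2 (B1 : 'M[F]_d1) (B2 : 'M[F]_d2) psi
  (L1 : n1.-tuple 'rV[F]_d1) (L2 : n2.-tuple 'rV[F]_d2) g :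
  Hspace (prod_form B1 B2) psi (smap L1 L2) g -> forall h1, Hspace B2 psi L2 (rstar g h1).
Proof.
move=> hg h1 z l h2 hl; rewrite /rstar.
have := hg z (row_mx 0 l) (rmap h1 h2); rewrite in_lag_row_mx hl /in_lag sub0mx => /(_ isT).
have e1 : ((0, z) : heis F (d1 + d2)) = rmap (0, 0) (0, z) by rewrite /rmap row_mx0 add0r.
have e2 : ((row_mx 0 l, 0) : heis F (d1 + d2)) = rmap (0, 0) (l, 0) by rewrite /rmap addr0.
by rewrite e1 e2 !hmul_rmap !hmul0.
Qed.

Lemma Hs_r1 (F : finFieldType) d1 d2 n1 n2 (B1 : 'M[F]_d1) (B2 : 'M[F]_d2) psi
  (L1 : n1.-tuple 'rV[F]_d1) (L2 : n2.-tuple 'rV[F]_d2) g :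
  Hspace (prod_form B1 B2) psi (smap L1 L2) g -> forall z l h1 h2, in_lag L1 l ->
  rstar g (hmul B1 (hmul B1 (0, z) (l, 0)) h1) h2 = psi z * rstar g h1 h2.
Proof.
move=> hg z l h1 h2 hl; rewrite /rstar.
have := hg z (row_mx l 0) (rmap h1 h2); rewrite in_lag_row_mx hl /in_lag sub0mx => /(_ isT).
have e1 : ((0, z) : heis F (d1 + d2)) = rmap (0, z) (0, 0) by rewrite /rmap row_mx0 addr0.
have e2 : ((row_mx l 0, 0) : heis F (d1 + d2)) = rmap (l, 0) (0, 0) by rewrite /rmap addr0.
by rewrite e1 e2 !hmul_rmap !hmul0.
Qed.


Lemma sign_sq (R : comRingType) k (D : R) : (-1) ^+ k * ((-1) ^+ k * D) = D.
Proof. by rewrite mulrA -exprMn mulrNN mulr1 expr1n mul1r. Qed.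

Definition sq (F : finFieldType) (x : F) := exists s, s * s = x.

Lemma legendreM_sq (F : finFieldType) (x y : F) : sq x -> legendre (x * y) = legendre x * legendre y.
Proof.
case=> s <-; rewrite /legendre.
have [->|s0] := eqVneq s 0; first by rewrite !mul0r eqxx mul0r.
have ss0 : s * s != 0 by rewrite mulf_neq0.
rewrite (negbTE ss0) mulf_eq0 (negbTE ss0) /=.
have -> : [exists y0, y0 * y0 == s * s] by apply/existsP; exists s.
rewrite mul1r; case: (y == 0) => //; congr (if _ then _ else _).
apply/existsP/existsP => [[w /eqP hw]|[w /eqP hw]].
  exists (w / s); apply/eqP; apply: (mulfI ss0).
  have e : s * (w / s) = w by rewrite mulrC divfK.
  by rewrite -hw mulrACA e.
by exists (s * w); rewrite mulrACA hw.
Qed.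

Lemma T0_scale (F : finFieldType) d n (B : 'M[F]_d) psi (M L : n.-tuple 'rV[F]_d) (c : algC) f :
  T0 B psi M L (fun h => c * f h) = fun h => c * T0 B psi M L f h.
Proof.
apply: functional_extensionality => h; rewrite /T0 -mulr_sumr.
by rewrite mulrCA.
Qed.

Lemma T0_comm (F : finFieldType) d1 d2 n1 n2 (B1 : 'M[F]_d1) (B2 : 'M[F]_d2) psi
  (M1 L1 : n1.-tuple 'rV[F]_d1) (M2 L2 : n2.-tuple 'rV[F]_d2)
  (X : heis F d1 -> heis F d2 -> algC) h1 h2 :
  T0 B1 psi M1 L1 (fun a => T0 B2 psi M2 L2 (X a) h2) h1 =
  T0 B2 psi M2 L2 (fun b => T0 B1 psi M1 L1 (fun a => X a b) h1) h2.
Proof.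
rewrite /T0 !mulr_sumr.
under eq_bigr do rewrite !mulr_sumr.
under [RHS]eq_bigr do rewrite !mulr_sumr.
rewrite exchange_big; apply: eq_bigr => m2 _; apply: eq_bigr => m1 _; exact: mulrCA.
Qed.

Lemma leg_ow (F : finFieldType) d n (B : 'M[F]_d) (L M : n.-tuple 'rV[F]_d) :
  legendre ((-1) ^+ (n * n.-1)./2 * omega_wedge B L M) = legendre (\det (lagmx L *m B *m (lagmx M)^T)).
Proof. by rewrite /omega_wedge sign_sq omega_mx. Qed.

Lemma det_smap (F : finFieldType) d1 d2 n1 n2 (B1 : 'M[F]_d1) (B2 : 'M[F]_d2)
  (M1 L1 : n1.-tuple 'rV[F]_d1) (M2 L2 : n2.-tuple 'rV[F]_d2) :
  \det (lagmx (smap L1 L2) *m prod_form B1 B2 *m (lagmx (smap M1 M2))^T) =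
  \det (lagmx L1 *m B1 *m (lagmx M1)^T) * \det (lagmx L2 *m B2 *m (lagmx M2)^T).
Proof.
rewrite !lagmx_smap /prod_form tr_block_mx !trmx0 !mulmx_block.
rewrite ?(mulmx0, mul0mx, addr0, add0r).
by rewrite det_ublock.
Qed.

Lemma sum_smap (F : finFieldType) d1 d2 n1 n2 (M1 : n1.-tuple 'rV[F]_d1) (M2 : n2.-tuple 'rV[F]_d2)
  (Phi : 'rV[F]_(d1 + d2) -> algC) :
  \sum_(m | in_lag (smap M1 M2) m) Phi m =
  \sum_(m1 | in_lag M1 m1) \sum_(m2 | in_lag M2 m2) Phi (row_mx m1 m2).
Proof.
rewrite pair_big_dep /=.
rewrite (reindex (fun p : 'rV[F]_d1 * 'rV[F]_d2 => row_mx p.1 p.2)) /=.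
  by apply: eq_bigl => p; rewrite in_lag_row_mx.
exists (fun m => (lsubmx m, rsubmx m)) => [p _|m _] /=.
  by rewrite row_mxKl row_mxKr; case: p.
by rewrite hsubmxK.
Qed.

Lemma rm0 (F : finFieldType) d1 d2 (a : 'rV[F]_d1) (b : 'rV[F]_d2) :
  ((row_mx a b, 0) : heis F (d1 + d2)) = rmap (a, 0) (b, 0).
Proof. by rewrite /rmap addr0. Qed.

Lemma T0_split (F : finFieldType) d1 d2 n1 n2 (B1 : 'M[F]_d1) (B2 : 'M[F]_d2) psi
  (M1 L1 : n1.-tuple 'rV[F]_d1) (M2 L2 : n2.-tuple 'rV[F]_d2) G :
  sq (\det (lagmx L1 *m B1 *m (lagmx M1)^T)) \/ sq (\det (lagmx L2 *m B2 *m (lagmx M2)^T)) ->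
  rstar (T0 (prod_form B1 B2) psi (smap M1 M2) (smap L1 L2) G) =
  tensT (T0 B1 psi M1 L1) (T0 B2 psi M2 L2) (rstar G).
Proof.
move=> hsq; apply: functional_extensionality => h1; apply: functional_extensionality => h2.
rewrite /rstar /tensT /T0 !leg_ow det_smap sum_smap.
have -> : legendre (\det (lagmx L1 *m B1 *m (lagmx M1)^T) * \det (lagmx L2 *m B2 *m (lagmx M2)^T)) =
  legendre (\det (lagmx L1 *m B1 *m (lagmx M1)^T)) * legendre (\det (lagmx L2 *m B2 *m (lagmx M2)^T)).
  case: hsq => hsq; first exact: legendreM_sq.
  by rewrite mulrC legendreM_sq // mulrC.
under eq_bigr do under eq_bigr do rewrite rm0 hmul_rmap.
rewrite -mulr_sumr exprD mulrACA -!mulrA; congr (_ * _); congr (_ * _).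
Qed.


Lemma iso_mx (F : finFieldType) d n (B : 'M[F]_d) (L : n.-tuple 'rV[F]_d) :
  is_olag B L -> lagmx L *m B *m (lagmx L)^T = 0.
Proof.
case=> _ _ h; apply/matrixP => i j; by rewrite omega_rows !lagmx_row h mxE.
Qed.

Lemma olag_smap (F : finFieldType) d1 d2 n1 n2 (B1 : 'M[F]_d1) (B2 : 'M[F]_d2)
  (L1 : n1.-tuple 'rV[F]_d1) (L2 : n2.-tuple 'rV[F]_d2) :
  is_olag B1 L1 -> is_olag B2 L2 -> is_olag (prod_form B1 B2) (smap L1 L2).
Proof.
move=> h1 h2; have i1 := iso_mx h1; have i2 := iso_mx h2.
case: h1 => e1 f1 _; case: h2 => e2 f2 _; split.
- by rewrite doubleD e1 e2.
- by rewrite /row_free lagmx_smap rank_diag_block_mx (eqP f1) (eqP f2).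
move=> i j; rewrite -!lagmx_row -omega_rows.
rewrite !lagmx_smap /prod_form tr_block_mx !trmx0 !mulmx_block.
by rewrite ?(mulmx0, mul0mx, addr0, add0r) i1 i2 block_mx0 mxE.
Qed.

Lemma row_full_rows (F : fieldType) m n (A : 'M[F]_(m, n)) :
  (forall v : 'rV_n, (v <= A)%MS) -> row_full A.
Proof. by move=> h; rewrite -sub1mx; apply/row_subP => i; apply: h. Qed.

Lemma genpos_smap (F : finFieldType) d1 d2 n1 n2
  (M1 L1 : n1.-tuple 'rV[F]_d1) (M2 L2 : n2.-tuple 'rV[F]_d2) :
  gen_pos M1 L1 -> gen_pos M2 L2 -> gen_pos (smap M1 M2) (smap L1 L2).
Proof.
rewrite /gen_pos => g1 g2; apply: row_full_rows => v.
rewrite -[v]hsubmxK.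
have : (lsubmx v <= col_mx (lagmx M1) (lagmx L1))%MS by exact: submx_full.
have : (rsubmx v <= col_mx (lagmx M2) (lagmx L2))%MS by exact: submx_full.
rewrite -!addsmxE => /sub_addsmxP[u ->] /sub_addsmxP[w ->].
have -> : row_mx (w.1 *m lagmx M1 + w.2 *m lagmx L1) (u.1 *m lagmx M2 + u.2 *m lagmx L2) =
  (row_mx (w.1 *m lagmx M1) (u.1 *m lagmx M2)) + row_mx (w.2 *m lagmx L1) (u.2 *m lagmx L2).
  by rewrite add_row_mx.
have hl : forall (X1 : n1.-tuple 'rV[F]_d1) (X2 : n2.-tuple 'rV[F]_d2) (a : 'rV[F]_d1) (b : 'rV[F]_d2),
    (a <= lagmx X1)%MS -> (b <= lagmx X2)%MS -> (row_mx a b <= lagmx (smap X1 X2))%MS.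
  move=> X1 X2 a b ha hb; have := in_lag_row_mx X1 X2 a b; rewrite /in_lag => ->.
  by rewrite ha hb.
by apply: addmx_sub_adds; apply: hl; rewrite submxMl.
Qed.


Lemma T_factor (F : finFieldType) d n (B : 'M[F]_d) psi
  (T : n.-tuple 'rV[F]_d -> n.-tuple 'rV[F]_d -> (heis F d -> algC) -> heis F d -> algC)
  (hT : canonical_triv B psi T) M N L f :
  is_olag B M -> is_olag B N -> is_olag B L -> gen_pos M N -> gen_pos N L -> Hspace B psi L f ->
  T M L f = T0 B psi M N (T0 B psi N L f).
Proof.
move=> hM hN hL gMN gNL hf.
case: (hT N L hN hL) => mapNL [_ [_ [_ [_ [cocNL gpNL]]]]].
case: (hT M N hM hN) => _ [_ [_ [_ [_ [_ gpMN]]]]].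
rewrite -(cocNL M f hM hf) gpMN //; last exact: mapNL.
by rewrite gpNL.
Qed.


Lemma omegaDl (F : finFieldType) d (B : 'M[F]_d) u w x :
  omega B (u + w) x = omega B u x + omega B w x.
Proof. by rewrite /omega !mulmxDl mxE. Qed.

Lemma omegaDr (F : finFieldType) d (B : 'M[F]_d) u w x :
  omega B x (u + w) = omega B x u + omega B x w.
Proof. by rewrite /omega linearD /= mulmxDr mxE. Qed.

Lemma omega_skew (F : finFieldType) d (B : 'M[F]_d) u w :
  (forall v, omega B v v = 0) -> omega B u w = - omega B w u.
Proof.
move=> h; apply/eqP; rewrite -addr_eq0; apply/eqP.
have := h (u + w); rewrite !omegaDl !omegaDr !h add0r addr0.
by [].
Qed.

Lemma rankUl (F : fieldType) d m (B : 'M[F]_d) (Y : 'M[F]_(d, m)) :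
  B \in unitmx -> \rank (B *m Y) = \rank Y.
Proof.
move=> hB; rewrite -mxrank_tr trmx_mul mxrankMfree ?mxrank_tr //.
by rewrite row_free_unit unitmx_tr.
Qed.

Lemma rank_add1 (F : fieldType) d m (v : 'rV[F]_d) (A : 'M[F]_(m, d)) :
  ~~ (v <= A)%MS -> \rank (v + A)%MS = (\rank A).+1.
Proof.
move=> nvA.
have v0 : v != 0 by apply: contraNneq nvA => ->; rewrite sub0mx.
have := mxrank_sum_cap v A; rewrite rank_rV v0.
have : \rank (v :&: A)%MS = 0%N.
  have := mxrank_leqif_sup (capmxSl v A); rewrite rank_rV v0.
  case=> le1 eq1; move: le1; rewrite leq_eqVlt eq1 ltnS leqn0.
  case/orP => [hv|/eqP //]; case/negP: nvA.
  exact: submx_trans hv (capmxSr _ _).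
by move=> ->; rewrite addn0 add1n.
Qed.

Lemma nat_contra n s d : n.*2 = d -> (s < n)%N -> (d - s <= s + (d - (s + n)))%N -> False.
Proof.
move=> hd hs; rewrite -hd -addnn.
move/ssrnat.leP: hs => hs h; move/ssrnat.leP: h. rewrite -?(plusE, minusE). lia.
Qed.

Lemma not_in (F : finFieldType) d n s (B : 'M[F]_d) (S : 'M[F]_(s, d)) (U : 'M[F]_(n, d)) :
  B \in unitmx -> n.*2 = d -> (s < n)%N -> \rank S = s -> U *m B *m U^T = 0 ->
  S *m B *m S^T = 0 -> \rank (S + U)%MS = (s + n)%N ->
  ~~ (kermx (B *m S^T) <= S + U)%MS.
Proof.
move=> hB hd hs rS hUU hSS rSU.
set K := kermx (B *m S^T).
apply/negP => hK.
have SK : (S <= K)%MS by rewrite sub_kermx mulmxA hSS.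
have h1 : (K <= S + (K :&: U))%MS.
  case/sub_addsmxP: hK => u hu.
  have h2 : (u.2 *m U <= K :&: U)%MS.
    rewrite sub_capmx submxMl andbT.
    have -> : u.2 *m U = K - u.1 *m S by rewrite hu addrAC subrr add0r.
    rewrite addmx_sub // eqmx_opp; exact: submx_trans (submxMl _ _) SK.
  by rewrite {1}hu addmx_sub_adds ?submxMl.
have h3 : (K :&: U <= kermx (B *m (col_mx S U)^T))%MS.
  rewrite sub_kermx tr_col_mx !mul_mx_row.
  have -> : (K :&: U)%MS *m (B *m S^T) = 0.
    by apply/eqP; rewrite -sub_kermx capmxSl.
  have -> : (K :&: U)%MS *m (B *m U^T) = 0.
    by case/submxP: (capmxSr K U) => w ->; rewrite !mulmxA -(mulmxA w) -mulmxA hUU mulmx0.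
  by rewrite row_mx0.
have rK : \rank K = (d - s)%N by rewrite mxrank_ker rankUl // mxrank_tr rS.
have rK2 : \rank (kermx (B *m (col_mx S U)^T)) = (d - (s + n))%N.
  by rewrite mxrank_ker rankUl // mxrank_tr -addsmxE rSU.
apply: (nat_contra hd hs); rewrite -rK -rK2.
apply: leq_trans (mxrankS h1) _.
apply: leq_trans (mxrank_adds_leqif _ _).1 _.
by rewrite rS leq_add2l mxrankS.
Qed.

Lemma pick_row (F : fieldType) m k d (A : 'M[F]_(m, d)) (U : 'M[F]_(k, d)) :
  ~~ (A <= U)%MS -> exists v : 'rV[F]_d, (v <= A)%MS /\ ~~ (v <= U)%MS.
Proof. by case/row_subPn => i hi; exists (row i A); rewrite row_sub. Qed.

Lemma subB_sub (F : fieldType) m k d (x y : 'M[F]_(m, d)) (U : 'M[F]_(k, d)) :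
  (x <= U)%MS -> (y <= U)%MS -> ((x - y)%R <= U)%MS.
Proof. by move=> hx hy; rewrite addmx_sub // eqmx_opp. Qed.

Lemma union2 (F : fieldType) m k1 k2 d (K : 'M[F]_(m, d)) (U1 : 'M[F]_(k1, d)) (U2 : 'M[F]_(k2, d)) :
  ~~ (K <= U1)%MS -> ~~ (K <= U2)%MS ->
  exists v : 'rV[F]_d, [/\ (v <= K)%MS, ~~ (v <= U1)%MS & ~~ (v <= U2)%MS].
Proof.
move=> /pick_row[a [aK aU]] /pick_row[b [bK bU]].
have [aU2|aU2] := boolP (a <= U2)%MS; last by exists a.
have [bU1|bU1] := boolP (b <= U1)%MS; last by exists b.
exists (a + b); split; first by rewrite addmx_sub.
  apply: contraNN aU => h; have := subB_sub h bU1; by rewrite (addrK b a).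
apply: contraNN bU => h; have := subB_sub h aU2; by rewrite addrAC subrr add0r.
Qed.

Lemma iso_col (F : finFieldType) d s (B : 'M[F]_d) (v : 'rV[F]_d) (S : 'M[F]_(s, d)) :
  (forall v, omega B v v = 0) -> S *m B *m S^T = 0 -> (v <= kermx (B *m S^T))%MS ->
  col_mx v S *m B *m (col_mx v S)^T = 0.
Proof.
move=> halt iS vK.
rewrite mul_col_mx tr_col_mx mul_col_row iS.
have e1 : v *m B *m S^T = 0 by apply/eqP; rewrite -mulmxA -sub_kermx.
have e2 : v *m B *m v^T = 0 by apply/matrixP => i j; rewrite !ord1 [RHS]mxE; exact: halt.
have e3 : S *m B *m v^T = 0.
  apply/matrixP => i j; rewrite omega_rows omega_skew // -omega_rows e1 !mxE oppr0 //.
by rewrite e1 e2 e3 block_mx0.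
Qed.

Lemma transv_ind (F : finFieldType) d n (B : 'M[F]_d) (L M : 'M[F]_(n, d)) :
  (forall v, omega B v v = 0) -> B \in unitmx -> n.*2 = d ->
  L *m B *m L^T = 0 -> M *m B *m M^T = 0 -> \rank L = n -> \rank M = n ->
  forall s, (s <= n)%N -> exists S : 'M[F]_(s, d),
  [/\ \rank S = s, S *m B *m S^T = 0, \rank (S + L)%MS = (s + n)%N & \rank (S + M)%MS = (s + n)%N].
Proof.
move=> halt hB hd hL hM rL rM; elim=> [|s IH] hs.
  exists 0; rewrite mxrank0 !mul0mx !adds0mx rL rM; split => //.
have [S [rS iS rSL rSM]] := IH (ltnW hs).
have [v [vK vL vM]] := union2 (not_in hB hd hs rS hL iS rSL) (not_in hB hd hs rS hM iS rSM).
have vS : ~~ (v <= S)%MS by apply: contraNN vL => h; apply: submx_trans h (addsmxSl _ _).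
have hr : forall k (U : 'M[F]_(k, d)), ~~ (v <= S + U)%MS ->
    \rank (col_mx v S + U)%MS = (\rank (S + U)%MS).+1.
  move=> k U hvU.
  rewrite (adds_eqmx (eqmx_sym (addsmxE v S)) (eqmx_refl U)) -addsmxA.
  exact: rank_add1.
exists (col_mx v S); split.
- have -> : \rank (col_mx v S) = \rank (v + S)%MS by rewrite addsmxE.
  by rewrite rank_add1 // rS.
- exact: iso_col.
- by rewrite hr // rSL.
- by rewrite hr // rSM.
Qed.


Lemma scal (F : finFieldType) n (de : F) : (n = 0%N -> de = 1) ->
  exists D : 'M[F]_n, D \in unitmx /\ sq (\det D * de).
Proof.
move=> h0; have [->|de0] := eqVneq de 0.
  by exists 1%:M; split; [exact: unitmx1 | exists 0; rewrite !mulr0].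
case: (posnP n) => [n0|npos].
  by exists 1%:M; split; [exact: unitmx1 | exists 1; rewrite det1 h0 ?(eqP n0) // !mulr1].
pose D : 'M[F]_n := diag_mx (\row_(i < n) (if (i : nat) == 0%N then de^-1 else 1)).
have dD : \det D = de^-1.
  rewrite det_diag (bigD1 (Ordinal npos)) //= mxE eqxx big1 ?mulr1 // => i hi.
  rewrite mxE ifN //; apply: contra hi => /eqP hi0; apply/eqP/val_inj => /=; exact: hi0.
exists D; split.
  by rewrite unitmxE dD unitfE invr_eq0.
by exists 1; rewrite dD mulr1 mulVf.
Qed.

Lemma transv_tuple (F : finFieldType) d n (B : 'M[F]_d) (L M : n.-tuple 'rV[F]_d)
  (phi : 'M[F]_(n, d) -> F) :
  symplectic B -> is_olag B L -> is_olag B M ->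
  (forall D X, phi (D *m X) = \det D * phi X) -> (n = 0%N -> forall X, phi X = 1) ->
  exists N : n.-tuple 'rV[F]_d, [/\ is_olag B N, gen_pos N L, gen_pos M N & sq (phi (lagmx N))].
Proof.
move=> [halt hB] hL hM hphi hphi0.
have [hd fL _] := hL; have [_ fM _] := hM.
have [X [rX iX rXL rXM]] := transv_ind halt hB hd (iso_mx hL) (iso_mx hM) (eqP fL) (eqP fM) (leqnn n).
have [D [uD sqD]] := scal (fun n0 => hphi0 n0 X).
pose Y := D *m X.
have eY : (Y :=: X)%MS by apply: eqmxMfull; rewrite row_full_unit.
pose N := [tuple row i Y | i < n].
have lN : lagmx N = Y by apply/row_matrixP => i; rewrite lagmx_row tnth_mktuple.
exists N; rewrite lN; split.
- split => //; first by rewrite /row_free lN eY rX.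
  move=> i j; rewrite -!lagmx_row lN -omega_rows.
  rewrite /Y trmx_mul !mulmxA -(mulmxA D X B) -(mulmxA D (X *m B)) iX mulmx0 mul0mx.
  by rewrite mxE.
- by rewrite /gen_pos lN /row_full -addsmxE (adds_eqmx eY (eqmx_refl _)) rXL addnn hd.
- by rewrite /gen_pos lN /row_full -addsmxE addsmxC (adds_eqmx eY (eqmx_refl _)) rXM addnn hd.
- by rewrite /Y hphi.
Qed.


Lemma det0 (R : comRingType) n (A : 'M[R]_n) : n = 0%N -> \det A = 1.
Proof. by move=> n0; move: A; rewrite n0 => A; exact: det_mx00. Qed.

Unset Implicit Arguments.

Theorem mainTheorem9 (F : finFieldType) (hchar : (2%:R : F) != 0)
  (psi : F -> algC) (psi0 : psi 0 = 1)
  (psiD : forall a b, psi (a + b) = psi a * psi b)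
  (psi_nt : exists a, psi a != 1)
  (d1 d2 n1 n2 : nat) (B1 : 'M[F]_d1) (B2 : 'M[F]_d2)
  (hB1 : symplectic B1) (hB2 : symplectic B2)
  (T1 : n1.-tuple 'rV[F]_d1 -> n1.-tuple 'rV[F]_d1 ->
        (heis F d1 -> algC) -> heis F d1 -> algC)
  (T2 : n2.-tuple 'rV[F]_d2 -> n2.-tuple 'rV[F]_d2 ->
        (heis F d2 -> algC) -> heis F d2 -> algC)
  (T12 : (n1 + n2).-tuple 'rV[F]_(d1 + d2) -> (n1 + n2).-tuple 'rV[F]_(d1 + d2) ->
        (heis F (d1 + d2) -> algC) -> heis F (d1 + d2) -> algC)
  (hT1 : canonical_triv B1 psi T1) (hT2 : canonical_triv B2 psi T2)
  (hT12 : canonical_triv (prod_form B1 B2) psi T12)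
  (L1 M1 : n1.-tuple 'rV[F]_d1) (L2 M2 : n2.-tuple 'rV[F]_d2)
  (hL1 : is_olag B1 L1) (hM1 : is_olag B1 M1)
  (hL2 : is_olag B2 L2) (hM2 : is_olag B2 M2)
  (g : heis F (d1 + d2) -> algC)
  (hg : Hspace (prod_form B1 B2) psi (smap L1 L2) g) :
  tensT (T1 M1 L1) (T2 M2 L2) (rstar g) =
  rstar (T12 (smap M1 M2) (smap L1 L2) g).
Proof.
have [N1 [hN1 gN1L1 gM1N1 sq1]] :=
  @transv_tuple F d1 n1 B1 L1 M1 (fun X => \det (lagmx L1 *m B1 *m X^T)) hB1 hL1 hM1
    (fun D X => ltac:(by rewrite /= trmx_mul mulmxA det_mulmx det_tr mulrC))
    (fun n0 X => det0 _ n0).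
have [N2 [hN2 gN2L2 gM2N2 sq2]] :=
  @transv_tuple F d2 n2 B2 L2 M2 (fun X => \det (X *m B2 *m (lagmx M2)^T)) hB2 hL2 hM2
    (fun D X => ltac:(by rewrite /= -!mulmxA det_mulmx))
    (fun n0 X => det0 _ n0).
have gNL := genpos_smap gN1L1 gN2L2.
have gMN := genpos_smap gM1N1 gM2N2.
rewrite (T_factor hT12 (olag_smap hM1 hM2) (olag_smap hN1 hN2) (olag_smap hL1 hL2) gMN gNL hg).
rewrite T0_split; last by right.
rewrite T0_split; last by left.
apply: functional_extensionality => h1; apply: functional_extensionality => h2.
rewrite /tensT.
have e : (fun h1' => T2 M2 L2 (rstar g h1') h2) =
    (fun h1' => T0 B2 psi M2 N2 (T0 B2 psi N2 L2 (rstar g h1')) h2).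
  apply: functional_extensionality => h1'.
  by rewrite (T_factor hT2 hM2 hN2 hL2 gM2N2 gN2L2 (Hs_r2 hg h1')).
rewrite e (T_factor hT1 hM1 hN1 hL1 gM1N1 gN1L1).
  congr (T0 B1 psi M1 N1 _ h1); apply: functional_extensionality => a.
  exact: T0_comm.
move=> z l h hl /=.
have -> : rstar g (hmul B1 (hmul B1 (0, z) (l, 0)) h) = fun b => psi z * rstar g h b.
  by apply: functional_extensionality => b; exact: (Hs_r1 hg).
by rewrite !T0_scale.
Qed.
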